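(* Let $G = K_{m_1} \otimes \cdots \otimes K_{m_t}$ with $m_i \geq 3$ for all $i$, and let $W$ be a resolving set of $G$. Then for every $1 \le i \le t$, $|V(K_{m_i}) \setminus W(i)| \leq 1$.
   Context: $K_r$ is the complete graph on $r$ vertices. The tensor product of graphs has vertex set the Cartesian product of vertex sets, with $(a_1,\dots,a_t)$ adjacent to $(b_1,\dots,b_t)$ iff $a_ib_i$ is an edge of the $i$-th factor for every $i$. For $T \subseteq A_1\times\cdots\times A_t$, $T(i)\subseteq A_i$ denotes the set of elements of $A_i$ appearing as the $i$-th coordinate of some element of $T$. For a connected graph and an ordered set $W=\{w_1,\dots,w_k\}$ of vertices, $r(v\mid W)=(d(v,w_1),\dots,d(v,w_k))$; $W$ is a resolving set if distinct vertices have distinct representations. *)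

(* Defs.v *)
From mathcomp Require Import all_boot.
Set Implicit Arguments. Unset Strict Implicit. Unset Printing Implicit Defensive.

Fixpoint walk_le (T : finType) (e : rel T) (n : nat) (x y : T) : bool :=
  match n with
  | 0 => x == y
  | n'.+1 => walk_le e n' x y || [exists z, walk_le e n' x z && e z y]
  end.

(* Graph distance: the least n with a walk of length <= n from x to y.
   (A shortest walk has length < #|T|; for disconnected pairs the value
   defaults to #|T|, which never occurs in a connected graph.) *)
Definition gdist (T : finType) (e : rel T) (x y : T) : nat :=
  find (fun n => walk_le e n x y) (iota 0 #|T|).

Definition resolving (T : finType) (e : rel T) (W : {set T}) : Prop :=
  forall u v : T, (forall w, w \in W -> gdist e u w = gdist e v w) -> u = v.

Notation tvert m := {dffun forall i, 'I_(m i)}.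

Definition complete_rel (r : nat) : rel 'I_r := fun a b => a != b.

Definition tensor_complete_rel (t : nat) (m : 'I_t -> nat) : rel (tvert m) :=
  fun a b => [forall i, complete_rel (a i) (b i)].

Definition proj_set (t : nat) (m : 'I_t -> nat) (W : {set tvert m}) (i : 'I_t)
  : {set 'I_(m i)} := [set (w : tvert m) i | w in W].

(* Main.v *)
Require Import Defs.
From mathcomp Require Import all_boot.

Lemma walk_le_inv (T : finType) (e : rel T) (f : T -> T) :
  involutive f -> (forall x y, e (f x) (f y) = e x y) ->
  forall n x y, walk_le e n (f x) (f y) = walk_le e n x y.
Proof.
move=> fK fe; elim=> [|n IH] x y /=.
  by rewrite (can_eq fK).
rewrite IH; congr (_ || _); apply/existsP/existsP=> [[z /andP[h1 h2]]|[z /andP[h1 h2]]].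
  exists (f z); rewrite -IH fK h1 /=.
  by rewrite -fe fK.
exists (f z); rewrite IH h1 /=.
by rewrite fe.
Qed.

Lemma gdist_inv (T : finType) (e : rel T) (f : T -> T) :
  involutive f -> (forall x y, e (f x) (f y) = e x y) ->
  forall x y, gdist e (f x) (f y) = gdist e x y.
Proof.
move=> fK fe x y; rewrite /gdist; apply: eq_find => n.
exact: walk_le_inv.
Qed.

Theorem lemma2p2 (t : nat) (m : 'I_t -> nat) (W : {set tvert m}) :
  (forall i, 3 <= m i) ->
  resolving (@tensor_complete_rel t m) W ->
  forall i : 'I_t, #|[set: 'I_(m i)] :\: proj_set W i| <= 1.
Proof.
move=> hm hres i; rewrite leqNgt; apply/negP=> /card_gt1P [a [b [ha hb hab]]].
move: ha hb; rewrite !in_setD !in_setT !andbT => ha hb.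
pose ns (n : nat) := if n == val a then val b else if n == val b then val a else n.
have nsK : involutive ns.
  move=> n; rewrite /ns; have := hab; rewrite -val_eqE => /eqP hab'.
  have hba : (val b == val a) = false by apply/eqP=> h; apply: hab'; rewrite h.
  have hab2 : (val a == val b) = false by apply/eqP.
  case: (boolP (n == val a)) => [/eqP->|na]; first by rewrite ?eqxx ?hba.
  case: (boolP (n == val b)) => [/eqP->|nb]; first by rewrite ?eqxx ?hab2 ?hba.
  by rewrite ?(negbTE na) ?(negbTE nb).
have nslt : forall y : 'I_(m i), ns (val y) < m i.
  by move=> y; rewrite /ns; case: ifP => _; [|case: ifP => _]; apply: ltn_ord.
pose sw (j : 'I_t) (y : 'I_(m j)) : 'I_(m j) :=
  if j == i then insubd y (ns (val y)) else y.
have swK : forall j, involutive (sw j).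
  move=> j y; rewrite /sw; case: eqP => // ej; subst j.
  apply: val_inj; rewrite !val_insubd.
  have h1 := nslt y; rewrite h1.
  by rewrite nsK ltn_ord.
pose f (x : tvert m) : tvert m := finfun (fun j => sw j (x j)).
have fK : involutive f.
  by move=> x; apply/ffunP=> j; rewrite /f !ffunE swK.
have fe : forall x y, tensor_complete_rel (f x) (f y) = tensor_complete_rel x y.
  move=> x y; rewrite /tensor_complete_rel; apply: eq_forallb => j.
  by rewrite /complete_rel !ffunE (can_eq (swK j)).
pose x0 : tvert m := finfun (fun j => Ordinal (leq_trans (isT : 0 < 3) (hm j))).
pose u : tvert m := finfun (fun j => if j == i then insubd (x0 j) (val a) else x0 j).
have ui : val (u i) = val a.
  by rewrite /u ffunE eqxx val_insubd ltn_ord.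
have fw : forall w, w \in W -> f w = w.
  move=> w hw; apply/ffunP=> j; rewrite /f ffunE /sw; case: eqP => // ej; subst j.
  apply: val_inj; rewrite val_insubd /ns.
  have wa : val (w i) != val a.
    apply/eqP => h; move/negP: ha; apply; apply/imsetP; exists w => //; exact: val_inj.
  have wb : val (w i) != val b.
    apply/eqP => h; move/negP: hb; apply; apply/imsetP; exists w => //; exact: val_inj.
  by rewrite (negbTE wa) (negbTE wb) ltn_ord.
clearbody u.
have : u = f u.
  apply: hres => w hw.
  by rewrite -{2}(fw w hw) gdist_inv.
move/(congr1 (fun x : tvert m => val (x i))).
rewrite /f ffunE /sw eqxx val_insubd nslt ui /ns eqxx => h.
by move/negP: hab; apply; apply/eqP/val_inj.
Qed.
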